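(* Let $\mathcal{C}$ be a BMZ-collection in sufficiently general position, and let $\psi,\nu$ be rays in $\mathbb{R}^N$ emanating from $0$ that are both generic for $\mathcal{C}$. Then $\deg_\psi(\mathcal{C})=\deg_\nu(\mathcal{C})$.
   Context: Standing notation: $N=(d+1)(r-1)$; $w_1,\ldots,w_r\in\mathbb{R}^{r-1}$ the vertices of a regular $(r-1)$-simplex centered at $0$; $\varphi_i(x)=(x,1)\otimes w_i\in\mathbb{R}^N$ with $u\otimes v=(u_1v_1,\ldots,u_1v_n,u_2v_1,\ldots,u_mv_n)$; $\Phi(\mathcal{P})=\bigcup_i\{\varphi_i(p):p\in P_i\}$ for an $r$-tuple $\mathcal{P}$ of pairwise disjoint finite sets. A BMZ-collection is $\mathcal{C}=(C_1,\ldots,C_{d+2})$, pairwise disjoint finite subsets of $\mathbb{R}^d$, $|C_1|=\cdots=|C_{d+1}|=r-1$, $C_{d+2}=\{z\}$; ground set $C=\{c_1,\ldots,c_{N+1}\}$, $c_{N+1}=z$, $C_k=\{c_{(k-1)(r-1)+1},\ldots,c_{k(r-1)}\}$. Rainbow $r$-partition: $r$-tuple $(R_1,\ldots,R_r)$ of pairwise disjoint subsets of $C$ with $|R_i\cap C_j|\le1$; maximal if it covers $C$. $\mathbf{R}$: maximal rainbow $r$-partitions with $z\in R_r$. $\mathcal{R}-a$: remove $a$ from its class. $F_{\mathcal{R}}=\operatorname{conv}(\Phi(\mathcal{R}-z))$. Sufficiently general position: for all $\mathcal{R}\in\mathbf{R}$, $\Phi(\mathcal{R}-z)$ is affinely independent,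 and for all $\mathcal{R}\in\mathbf{R}$, $a\in C$, $0\notin\operatorname{aff}(\Phi(\mathcal{R}-a))$. A ray $\psi$ from $0$ is generic for $\mathcal{C}$ if it is disjoint from every ridge $\operatorname{conv}(\Phi(\mathcal{R}-z-a))$, $\mathcal{R}\in\mathbf{R}$, $a\in C\setminus\{z\}$. Signs: $\operatorname{gsgn}(\mathcal{R})=\operatorname{sgn}\det M$, where $M$ is the $N\times N$ matrix with row $j$ equal to $\varphi_i(c_j)$ for $c_j\in R_i$, $j\in[N]$. For $k\in[d+1]$, $\pi_k$ is the permutation of $[r]$ with $\pi_k(j)=i$ iff $c_{(k-1)(r-1)+j}\in R_i$ for $j\in[r-1]$, and $\pi_k(r)$ the remaining index; $\operatorname{csgn}(\mathcal{R})=\prod_k\operatorname{sgn}\pi_k$; $\operatorname{sgn}(\mathcal{R})=\operatorname{gsgn}(\mathcal{R})\operatorname{csgn}(\mathcal{R})$. $\deg_\psi(\mathcal{C})=\sum_{\mathcal{R}\in\mathbf{R}:\ \psi\cap F_{\mathcal{R}}\neq\emptyset}\operatorname{sgn}(\mathcal{R})$. *)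

(* Defs.v *)
From HB Require Import structures.
From mathcomp Require Import all_boot all_order all_algebra all_fingroup.
From Stdlib Require Import ClassicalEpsilon.
Set Implicit Arguments. Unset Strict Implicit. Unset Printing Implicit Defensive.
Import Order.TTheory GRing.Theory Num.Theory.
Local Open Scope ring_scope.

Definition asb (P : Prop) : bool :=
  if excluded_middle_informative P then true else false.

Definition Ndim (d r : nat) : nat := ((d + 1) * (r - 1))%N.

Section BMZ.
Variable R : rcfType.

Definition dotv n (u v : 'rV[R]_n) : R := \sum_(k < n) u 0 k * v 0 k.

Definition regular_simplex0 (r : nat) (w : 'I_r -> 'rV[R]_(r - 1)) : Prop :=
  \sum_(i < r) w i = 0 /\
  exists a : R, 0 < a /\
    forall i j : 'I_r, i != j -> dotv (w i - w j) (w i - w j) = a.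

(* u (x) v = (u_1v_1, ..., u_1v_n, u_2v_1, ..., u_mv_n): entry a*n+b is u_a v_b *)
Definition kron m n (u : 'rV[R]_m) (v : 'rV[R]_n) : 'rV[R]_(m * n) :=
  \row_(k < m * n) \sum_(a < m) \sum_(b < n)
     (if (nat_of_ord k == a * n + b)%N then u 0 a * v 0 b else 0).

Definition phi (d r : nat) (w : 'I_r -> 'rV[R]_(r - 1)) (i : 'I_r)
  (x : 'rV[R]_d) : 'rV[R]_(Ndim d r) :=
  kron (row_mx x (const_mx 1 : 'rV[R]_1)) (w i).

Definition in_conv (I : finType) n (P : pred I) (p : I -> 'rV[R]_n)
  (x : 'rV[R]_n) : Prop :=
  exists l : I -> R, (forall i, 0 <= l i) /\ \sum_(i | P i) l i = 1 /\
    x = \sum_(i | P i) l i *: p i.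

Definition in_aff (I : finType) n (P : pred I) (p : I -> 'rV[R]_n)
  (x : 'rV[R]_n) : Prop :=
  exists l : I -> R, \sum_(i | P i) l i = 1 /\ x = \sum_(i | P i) l i *: p i.

Definition aff_indep (I : finType) n (P : pred I) (p : I -> 'rV[R]_n) : Prop :=
  forall m : I -> R, \sum_(i | P i) m i = 0 -> \sum_(i | P i) m i *: p i = 0 ->
    forall i, P i -> m i = 0.

(* Ground set C = {c_1,...,c_{N+1}} indexed by 'I_(N+1) (0-based):
   index i < N lies in class C_{i %/ (r-1) + 1}, index N (= ord_max) is z.
   A maximal rainbow r-partition (R_1,...,R_r) is encoded by the function
   f : C -> [r] (0-based) sending each point to its class. *)
Section Coll.
Variables (d r : nat) (w : 'I_r -> 'rV[R]_(r - 1))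
          (c : 'I_(Ndim d r).+1 -> 'rV[R]_d).

Local Notation N := (Ndim d r).
Local Notation G := 'I_N.+1.
Local Notation z := (@ord_max N).

(* R in bold R: maximal rainbow r-partitions with z in R_r *)
Definition inbR (f : {ffun G -> 'I_r}) : bool :=
  (nat_of_ord (f z) == r.-1) &&
  [forall i : G, forall j : G,
     [&& i != j, i != z, j != z & (i %/ (r - 1) == j %/ (r - 1))%N]
       ==> (f i != f j)].

Definition PhiPt (f : {ffun G -> 'I_r}) (i : G) : 'rV[R]_N := phi w (f i) (c i).

Definition gmat (f : {ffun G -> 'I_r}) : 'M[R]_N :=
  \matrix_(i < N, j < N) PhiPt f (widen_ord (leqnSn N) i) 0 j.
Definition gsgn (f : {ffun G -> 'I_r}) : int := sgz (\det (gmat f)).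

Definition pik (f : {ffun G -> 'I_r}) (k : 'I_(d + 1)) : option {perm 'I_r} :=
  [pick s : {perm 'I_r} |
     [forall j : 'I_r, (j < r - 1)%N ==> (s j == f (inord (k * (r - 1) + j)))]].

Definition csgn (f : {ffun G -> 'I_r}) : int :=
  \prod_(k < d + 1)
     (if pik f k is Some s then (-1) ^+ odd_perm s else 1).

Definition sgnR (f : {ffun G -> 'I_r}) : int := gsgn f * csgn f.

Definition ray_meets_F (v : 'rV[R]_N) (f : {ffun G -> 'I_r}) : Prop :=
  exists t : R, 0 <= t /\ in_conv (fun i : G => i != z) (PhiPt f) (t *: v).

Definition generic_ray (v : 'rV[R]_N) : Prop :=
  forall f : {ffun G -> 'I_r}, inbR f -> forall a : G, a != z ->
    forall t : R, 0 <= t ->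
      ~ in_conv (fun i : G => (i != z) && (i != a)) (PhiPt f) (t *: v).

Definition suff_general_position : Prop :=
  (forall f : {ffun G -> 'I_r}, inbR f ->
     aff_indep (fun i : G => i != z) (PhiPt f)) /\
  (forall f : {ffun G -> 'I_r}, inbR f -> forall a : G,
     ~ in_aff (fun i : G => i != a) (PhiPt f) 0).

Definition degC (v : 'rV[R]_N) : int :=
  \sum_(f : {ffun G -> 'I_r} | inbR f && asb (ray_meets_F v f)) sgnR f.

End Coll.
End BMZ.

(* Main.v *)
Require Import Defs.
From HB Require Import structures.
From mathcomp Require Import all_boot all_order all_algebra all_fingroup.
From Stdlib Require Import ClassicalEpsilon.
Import Order.TTheory GRing.Theory Num.Theory.

Module M_A.
Set Implicit Arguments. Unset Strict Implicit. Unset Printing Implicit Defensive.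
Local Open Scope ring_scope.

Section Lin.
Variable R : rcfType.
Variables (d r : nat) (w : 'I_r -> 'rV[R]_(r - 1))
          (c : 'I_(Ndim d r).+1 -> 'rV[R]_d).
Local Notation N := (Ndim d r).
Local Notation G := 'I_N.+1.
Local Notation z := (@ord_max N).
Local Notation wid := (widen_ord (leqnSn N)).

Lemma sum_widen (V : nmodType) (F : G -> V) :
  \sum_(i : G | i != z) F i = \sum_(i < N) F (wid i).
Proof.
rewrite big_mkcond big_ord_recr /= eqxx addr0; apply: eq_bigr => i _.
have -> : (wid i != z) by rewrite -(inj_eq val_inj) /= neq_ltn ltn_ord.
by [].
Qed.

Definition M f := gmat w c f.
Definition lamv f (v : 'rV[R]_N) := v *m invmx (M f).
Definition lam f (j : 'I_N) v := lamv f v 0 j.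

Lemma rowM f i : row i (M f) = PhiPt w c f (wid i).
Proof. by apply/rowP => j; rewrite !mxE. Qed.

Lemma mulM f (l : 'rV[R]_N) : l *m M f = \sum_(i < N) l 0 i *: PhiPt w c f (wid i).
Proof. by rewrite mulmx_sum_row; apply: eq_bigr => i _; rewrite rowM. Qed.

Definition ext (v : 'rV[R]_N) (i : G) : R := \sum_(j < N | val j == val i) v 0 j.
Lemma ext_wid v i : ext v (wid i) = v 0 i.
Proof. by rewrite /ext (big_pred1 i) // => j /=; rewrite val_eqE. Qed.

Lemma unitM f : suff_general_position w c -> inbR f -> M f \in unitmx.
Proof.
move=> [Hind Haff] Hf; rewrite unitmxE unitfE; apply/negP => /det0P [v nz0 vM].
pose m := ext v.
have mw : forall i, m (wid i) = v 0 i by apply: ext_wid.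
have sumv : \sum_(i : G | i != z) m i *: PhiPt w c f i = 0.
  rewrite (sum_widen (fun i => m i *: PhiPt w c f i)) -[RHS]vM mulM.
  by apply: eq_bigr => i _; rewrite mw.
have [s0|sn0] := eqVneq (\sum_(i : G | i != z) m i) 0.
  have := Hind f Hf m s0 sumv => H.
  apply/negP: nz0; rewrite negbK; apply/eqP/rowP => j; rewrite mxE -mw; apply: H.
  by rewrite -(inj_eq val_inj) /= neq_ltn ltn_ord.
apply: (Haff f Hf z); exists (fun i => m i / \sum_(i : G | i != z) m i); split.
  by rewrite -mulr_suml divff.
rewrite (eq_bigr (fun i => (\sum_(i : G | i != z) m i)^-1 *: (m i *: PhiPt w c f i))).
  by rewrite -scaler_sumr sumv scaler0.
by move=> i _; rewrite scalerA mulrC.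
Qed.


Lemma lamvK f v : suff_general_position w c -> inbR f -> lamv f v *m M f = v.
Proof. by move=> H Hf; rewrite /lamv mulmxKV // unitM. Qed.

Lemma lamv_mul f l : suff_general_position w c -> inbR f -> lamv f (l *m M f) = l.
Proof. by move=> H Hf; rewrite /lamv mulmxK // unitM. Qed.

Lemma ext_ge0 (v : 'rV[R]_N) i : (forall j, 0 <= v 0 j) -> 0 <= ext v i.
Proof. by move=> H; apply: sumr_ge0 => j _; apply: H. Qed.

Lemma conv_build f v : suff_general_position w c -> inbR f -> v != 0 ->
  (forall j, 0 <= lam f j v) ->
  let S := \sum_(j < N) lam f j v in
  let l := fun i => ext (lamv f v) i / S in
  [/\ 0 < S, forall i, 0 <= l i, \sum_(i : G | i != z) l i = 1 &
      S^-1 *: v = \sum_(i : G | i != z) l i *: PhiPt w c f i].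
Proof.
move=> H Hf nz0 Hl S l.
have S0 : 0 < S.
  rewrite lt_def sumr_ge0 // andbT; apply/eqP => /psumr_eq0P H0.
  move/negP: nz0; apply; rewrite -(lamvK v H Hf).
  have -> : lamv f v = 0.
    apply/rowP => j; rewrite [RHS]mxE; have := H0 (fun i _ => Hl i) j isT; rewrite /lam => ->; done.
  by rewrite mul0mx.
split => //.
- by move=> i; rewrite /l divr_ge0 ?ext_ge0 ?ltW.
- rewrite sum_widen /l -mulr_suml (eq_bigr (fun j => lam f j v)); first by rewrite divff // gt_eqF.
  by move=> j _; rewrite ext_wid.
- rewrite sum_widen -{1}(lamvK v H Hf) mulM scaler_sumr; apply: eq_bigr => j _.
  by rewrite /l ext_wid scalerA mulrC.
Qed.

Lemma meets_iff f v : suff_general_position w c -> inbR f -> v != 0 ->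
  (ray_meets_F w c v f <-> forall j, 0 <= lam f j v).
Proof.
move=> H Hf nz0; split.
  move=> [t [t0 [l [l0 [l1 E]]]]].
  pose L := \row_(i < N) l (wid i).
  have LM : L *m M f = t *: v.
    by rewrite E mulM sum_widen; apply: eq_bigr => i _; rewrite mxE.
  have tn0 : t != 0.
    apply/eqP => t0'; move: LM; rewrite t0' scale0r => LM.
    have L0 : L = 0 by rewrite -(lamv_mul L H Hf) LM /lamv mul0mx.
    move: l1; rewrite sum_widen (eq_bigr (fun i => L 0 i)); last by move=> i _; rewrite mxE.
    by rewrite L0 (eq_bigr (fun _ => 0)) ?big1 // => [/eqP|i _]; rewrite ?mxE // eq_sym oner_eq0.
  have tp : 0 < t by rewrite lt_def tn0.
  move=> j; have : lamv f (t *: v) = L by rewrite -LM lamv_mul.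
  rewrite /lamv -scalemxAl => /rowP/(_ j); rewrite [LHS]mxE [RHS]mxE => E2.
  have : 0 <= t * lam f j v by rewrite /lam /lamv E2 l0.
  by rewrite pmulr_rge0.
move=> Hl; have [S0 l0 l1 E] := conv_build H Hf nz0 Hl.
exists (\sum_(j < N) lam f j v)^-1; split; first by rewrite invr_ge0 ltW.
by exists (fun i => ext (lamv f v) i / \sum_(j < N) lam f j v).
Qed.

Lemma ridge_build f v j0 : suff_general_position w c -> inbR f -> v != 0 ->
  (forall j, 0 <= lam f j v) -> lam f j0 v = 0 ->
  exists t, 0 <= t /\ in_conv (fun i : G => (i != z) && (i != wid j0)) (PhiPt w c f) (t *: v).
Proof.
move=> H Hf nz0 Hl Hj0; have [S0 l0 l1 E] := conv_build H Hf nz0 Hl.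
have lz : ext (lamv f v) (wid j0) / (\sum_(j < N) lam f j v) = 0.
  by rewrite ext_wid; move: Hj0; rewrite /lam => ->; rewrite mul0r.
exists (\sum_(j < N) lam f j v)^-1; split; first by rewrite invr_ge0 ltW.
exists (fun i => ext (lamv f v) i / \sum_(j < N) lam f j v); split => //; split.
  rewrite -l1 big_mkcondr /=; apply: eq_bigr => i _; case: eqP => // ->.
  by rewrite lz.
rewrite E big_mkcondr /=; apply: eq_bigr => i _; case: eqP => // ->.
by rewrite lz scale0r.
Qed.

End Lin.

End M_A.
Import M_A.

Module M_B.
Set Implicit Arguments. Unset Strict Implicit. Unset Printing Implicit Defensive.
Local Open Scope ring_scope.

Section Cramer.
Variable R : fieldType.
Variable n : nat.
Definition Mrep (A : 'M[R]_n) (j : 'I_n) (x : 'rV[R]_n) : 'M[R]_n :=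
  \matrix_(i, k) if i == j then x 0 k else A i k.

Lemma cofactor_rep A j x i : cofactor (Mrep A j x) j i = cofactor A j i.
Proof.
rewrite /cofactor; congr (_ * _); congr (\det _); apply/matrixP => a b.
by rewrite !mxE eq_sym (negbTE (neq_lift _ _)).
Qed.

Lemma cramer A j x : A \in unitmx ->
  (x *m invmx A) 0 j * \det A = \det (Mrep A j x).
Proof.
move=> U; rewrite /invmx U -scalemxAr mxE mulrAC.
rewrite [\det (Mrep _ _ _)](expand_det_row _ j) mxE mulVf ?mul1r; last by rewrite -unitfE -unitmxE.
apply: eq_bigr => i _; rewrite !mxE eqxx cofactor_rep; done.
Qed.

Lemma Mrep_id A j x : Mrep (Mrep A j x) j x = Mrep A j x.
Proof. by apply/matrixP => a b; rewrite !mxE; case: eqP. Qed.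

Lemma Mrep_same A B j x : (forall i, i != j -> row i A = row i B) ->
  Mrep A j x = Mrep B j x.
Proof.
move=> H; apply/matrixP => a b; rewrite !mxE; case: eqP => // /eqP ne.
by have := H a ne => /rowP/(_ b); rewrite !mxE.
Qed.
End Cramer.

End M_B.
Import M_B.

Module M_C.
Set Implicit Arguments. Unset Strict Implicit. Unset Printing Implicit Defensive.

Section Comb.
Variables (d r : nat).
Local Notation N := (Ndim d r).
Local Notation G := 'I_N.+1.
Local Notation z := (@ord_max N).
Local Notation K := (r - 1)%N.
Local Notation wid := (widen_ord (leqnSn N)).
Local Notation FF := {ffun G -> 'I_r}.

Definition cls (k t : nat) : G := inord (k * K + t).

Lemma clsK_lt k t : (k < d + 1)%N -> (t < K)%N -> (k * K + t < N)%N.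
Proof.
move=> hk ht.
apply: leq_trans (_ : (k * K + K <= N)%N); first by rewrite ltn_add2l.
by rewrite /Ndim -mulSnr leq_mul2r hk orbT.
Qed.

Lemma cls_val k t : (k < d + 1)%N -> (t < K)%N -> nat_of_ord (cls k t) = (k * K + t)%N.
Proof. by move=> hk ht; rewrite /cls inordK // ltnS ltnW // clsK_lt. Qed.

Lemma cls_neqz k t : (k < d + 1)%N -> (t < K)%N -> cls k t != z.
Proof. by move=> hk ht; rewrite -(inj_eq val_inj) /= cls_val // neq_ltn clsK_lt. Qed.

Lemma Kpos_of (j : 'I_N) : (0 < K)%N.
Proof.
case: j => j; rewrite /Ndim; case: (r - 1)%N => //; by rewrite muln0.
Qed.

Lemma cls_div k t : (0 < K)%N -> (t < K)%N -> ((k * K + t) %/ K)%N = k.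
Proof. by move=> hK ht; rewrite divnMDl // divn_small // addn0. Qed.

Lemma cls_inj k t t' : (k < d + 1)%N -> (t < K)%N -> (t' < K)%N ->
  cls k t = cls k t' -> t = t'.
Proof.
move=> hk ht ht' /(congr1 val) /=; rewrite !cls_val //; apply: addnI.
Qed.

Lemma wid_cls (j : 'I_N) :
  [/\ (j %/ K < d + 1)%N, (j %% K < K)%N & wid j = cls (j %/ K) (j %% K)].
Proof.
have hK := Kpos_of j.
have hk : (j %/ K < d + 1)%N by rewrite ltn_divLR // mulnC; case: j.
have ht : (j %% K < K)%N by rewrite ltn_pmod.
split => //; apply: val_inj; rewrite /= cls_val //; exact: divn_eq.
Qed.

Lemma rainbow f (i j : G) : inbR f -> i != j -> i != z -> j != z ->
  (i %/ K == j %/ K)%N -> f i != f j.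
Proof.
move=> /andP [_ /forallP H] ij iz jz cl; have := H i => /forallP /(_ j).
by rewrite ij iz jz cl.
Qed.

Lemma inbR_z f : inbR f -> nat_of_ord (f z) = r.-1.
Proof. by move=> /andP [/eqP -> _]. Qed.

Lemma perm_ex f k : inbR f -> (k < d + 1)%N ->
  exists s : {perm 'I_r}, forall x : 'I_r, (x < K)%N -> s x = f (cls k x).
Proof.
move=> Hf hk.
have r0 : (0 < r)%N by case: (f z) => x /=; case: r x => // x; rewrite ltn0.
pose S := [set f (cls k (val t)) | t : 'I_K].
have : ~~ ([set: 'I_r] \subset S).
  apply/negP => /subset_leq_card; rewrite cardsT card_ord => H.
  have := leq_trans H (leq_imset_card _ _); rewrite card_ord.
  by case: r r0 => // r' _; rewrite subn1 /= ltnn.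
case/subsetPn => m0 _ m0S.
have hm0 : forall t, (t < K)%N -> f (cls k t) != m0.
  move=> t ht; apply: contraNneq m0S => <-.
  by apply/imsetP; exists (Ordinal ht).
pose g (x : 'I_r) := if (x < K)%N then f (cls k x) else m0.
have ginj : injective g.
  move=> x y; rewrite /g.
  case: ifP => hx; case: ifP => hy.
  - move=> E; apply: val_inj; apply: (cls_inj hk hx hy).
    apply/eqP; apply: contraTT (introT eqP E) => ne.
    apply: rainbow => //; try by apply: cls_neqz.
    by rewrite !cls_val // !cls_div // (leq_ltn_trans _ hx).
  - by move=> E; move: (hm0 _ hx); rewrite E eqxx.
  - by move=> E; move: (hm0 _ hy); rewrite E eqxx.
  - move=> _; apply: val_inj; move: (negbT hx) (negbT hy) (ltn_ord x) (ltn_ord y).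
    rewrite -!leqNgt => hx2 hy2 lx ly.
    have ex : nat_of_ord x = K by apply/eqP; rewrite eqn_leq hx2 -ltnS subn1 prednK // andbT.
    have ey : nat_of_ord y = K by apply/eqP; rewrite eqn_leq hy2 -ltnS subn1 prednK // andbT.
    by rewrite /= ex ey.
exists (perm ginj) => x hx; rewrite permE /g hx //.
Qed.


Lemma G_cls (i : G) : i != z ->
  [/\ (i %/ K < d + 1)%N, (i %% K < K)%N & i = cls (i %/ K) (i %% K)].
Proof.
move=> iz; have iN : (i < N)%N by rewrite ltn_neqAle -ltnS ltn_ord andbT; move: iz; rewrite -(inj_eq val_inj).
have := wid_cls (Ordinal iN) => [[h1 h2 h3]]; split => //.
by rewrite -h3; apply: val_inj.
Qed.

Definition free (f : FF) (k : nat) (m : 'I_r) := forall x : nat, (x < K)%N -> f (cls k x) != m.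

Lemma free_unique (f : FF) k (s : {perm 'I_r}) m1 m2 : (forall x : 'I_r, (x < K)%N -> s x = f (cls k x)) ->
  free f k m1 -> free f k m2 -> m1 = m2.
Proof.
move=> Hs H1 H2.
have big : forall m, free f k m -> nat_of_ord ((s^-1)%g m) = K.
  move=> m Hm; set y := (s^-1)%g m.
  have sy : s y = m by rewrite /y permKV.
  case: (ltnP y K) => hy; first by move: (Hm y hy); rewrite -Hs // sy eqxx.
  apply/eqP; rewrite eqn_leq hy andbT -ltnS subn1 prednK; first exact: ltn_ord.
  by case: r y {sy hy} => // [[]].
have : (s^-1)%g m1 = (s^-1)%g m2 by apply: val_inj; rewrite /= !big.
exact: perm_inj.
Qed.

Definition others (f : FF) (j : 'I_N) (m : 'I_r) : bool :=
  [forall i : G, [&& i != z, i != wid j & (i %/ K == j %/ K)%N] ==> (f i != m)].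
Definition newcol (f : FF) j := [pick m | (m != f (wid j)) && others f j m].
Definition sw (f : FF) j : FF :=
  if newcol f j is Some m then [ffun i => if i == wid j then m else f i] else f.

Lemma free_iff f (j : 'I_N) m :
  reflect (free f (j %/ K) m) ((m != f (wid j)) && others f j m).
Proof.
have [hk ht Ej] := wid_cls j.
apply: (iffP idP).
  move=> /andP [mj /forallP Ho] x hx.
  case: (eqVneq (cls (j %/ K) x) (wid j)) => E; first by rewrite E eq_sym.
  have := Ho (cls (j %/ K) x); rewrite cls_neqz // E /= cls_val // cls_div //.
    by rewrite eqxx => /implyP; apply.
  exact: (Kpos_of j).
move=> Hm; apply/andP; split; first by rewrite Ej eq_sym; apply: Hm.
apply/forallP => i; apply/implyP => /and3P [iz ij /eqP ic].
have [hk' ht' Ei] := G_cls iz.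
by have := Hm _ ht'; rewrite -ic -Ei.
Qed.

Lemma last_lt : (0 < r)%N -> (K < r)%N.
Proof. by move=> r0; rewrite subn1 prednK. Qed.

Lemma sw_spec f (j : 'I_N) : inbR f -> exists m, free f (j %/ K) m /\
  sw f j = [ffun i => if i == wid j then m else f i].
Proof.
move=> Hf; have [hk ht Ej] := wid_cls j.
have r0 : (0 < r)%N by case: (f z) => x /=; case: r x => // x; rewrite ltn0.
have [s Hs] := perm_ex Hf hk.
rewrite /sw /newcol; case: pickP => [m /free_iff Hm | H]; first by exists m.
have := H (s (Ordinal (last_lt r0))); move/negbT/negP; case; apply/free_iff.
move=> x hx; have hxr : (x < r)%N := ltn_trans hx (last_lt r0).
rewrite -(Hs (Ordinal hxr)) //; apply/eqP => /perm_inj /(congr1 val) /= E.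
by move: hx; rewrite E ltnn.
Qed.


Lemma free_class f (j : 'I_N) m (i : G) : free f (j %/ K) m -> i != z ->
  (i %/ K == j %/ K)%N -> f i != m.
Proof.
move=> Hm iz /eqP ic; have [hk' ht' Ei] := G_cls iz.
by have := Hm _ ht'; rewrite -ic -Ei.
Qed.

Lemma wid_neqz (j : 'I_N) : wid j != z.
Proof. by rewrite -(inj_eq val_inj) /= neq_ltn ltn_ord. Qed.

Lemma sw_inbR f (j : 'I_N) : inbR f -> inbR (sw f j).
Proof.
move=> Hf; have [m [Hm ->]] := sw_spec j Hf.
have fm : f (wid j) != m.
  have [hk ht Ej] := wid_cls j; by rewrite Ej; apply: Hm.
have zn : (z == wid j) = false by rewrite eq_sym; apply/negbTE/wid_neqz.
apply/andP; split; first by rewrite ffunE zn; case/andP: Hf.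
apply/forallP => a; apply/forallP => b; apply/implyP => /and4P [ab az bz cl].
rewrite !ffunE; case: (eqVneq a (wid j)) => [Ea | na]; case: (eqVneq b (wid j)) => [Eb | nb].
- by move: ab; rewrite Ea Eb eqxx.
- rewrite eq_sym; apply: free_class Hm bz _; by rewrite -(eqP cl) Ea.
- apply: free_class Hm az _; by rewrite (eqP cl) Eb.
- exact: rainbow.
Qed.

Lemma sw_other f (j : 'I_N) i : inbR f -> i != wid j -> sw f j i = f i.
Proof. by move=> Hf ni; have [m [_ ->]] := sw_spec j Hf; rewrite ffunE (negbTE ni). Qed.

Lemma sw_at f (j : 'I_N) : inbR f -> free f (j %/ K) (sw f j (wid j)).
Proof. by move=> Hf; have [m [Hm ->]] := sw_spec j Hf; rewrite ffunE eqxx. Qed.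

Lemma sw_invol f (j : 'I_N) : inbR f -> sw (sw f j) j = f.
Proof.
move=> Hf; have Hf' := sw_inbR j Hf.
have [hk ht Ej] := wid_cls j.
have [s' Hs'] := perm_ex Hf' hk.
have [m' [Hm' ->]] := sw_spec j Hf'.
have Hm := sw_at j Hf.
have free_fj : free (sw f j) (j %/ K) (f (wid j)).
  move=> x hx; case: (eqVneq (cls (j %/ K) x) (wid j)) => E.
    by rewrite E; move: (Hm _ ht); rewrite -Ej eq_sym.
  rewrite sw_other //; apply: rainbow => //; try exact: cls_neqz; try exact: wid_neqz.
  by rewrite cls_val // cls_div // (Kpos_of j).
rewrite (free_unique Hs' Hm' free_fj); apply/ffunP => i; rewrite ffunE.
by case: eqP => [-> // | /eqP ni]; rewrite sw_other.
Qed.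


End Comb.

End M_C.
Import M_C.

Module M_D.
Set Implicit Arguments. Unset Strict Implicit. Unset Printing Implicit Defensive.
Section Comb2.
Variables (d r : nat).
Local Notation N := (Ndim d r).
Local Notation G := 'I_N.+1.
Local Notation z := (@ord_max N).
Local Notation K := (r - 1)%N.
Local Notation wid := (widen_ord (leqnSn N)).
Local Notation FF := {ffun G -> 'I_r}.
Local Notation cls := (@cls d r).

Lemma perm_eq_low (p q : {perm 'I_r}) :
  (forall x : 'I_r, (x < K)%N -> p x = q x) -> p = q.
Proof.
move=> H; apply/permP => x; case: (ltnP x K) => hx; first exact: H.
have r0 : (0 < r)%N by apply: leq_ltn_trans (ltn_ord x).
have lastv : forall y : 'I_r, (K <= y)%N -> nat_of_ord y = K.
  move=> y hy; apply/eqP; rewrite eqn_leq hy andbT -ltnS subn1 prednK //; exact: ltn_ord.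
have [y py] : exists y, p y = q x by have := permKV p (q x); exact: ex_intro.
case: (ltnP y K) => hy.
  have E : q y = q x by rewrite -py H.
  move: (perm_inj E) => E2; by move: hx; rewrite -E2 leqNgt hy.
have E3 : y = x by apply: val_inj; rewrite /= (lastv _ hy) (lastv _ hx).
by rewrite -{1}E3 py.
Qed.
Lemma pik_some f (k : 'I_(d + 1)) : inbR f -> exists s, pik f k = Some s /\
  forall x : 'I_r, (x < K)%N -> s x = f (cls k x).
Proof.
move=> Hf; have [s0 Hs0] := perm_ex Hf (ltn_ord k).
rewrite /pik; case: pickP => [s /forallP Hs | H].
  exists s; split => // x hx; have := Hs x; rewrite hx => /eqP; done.
have := H s0; move/negbT/negP; case; apply/forallP => x; apply/implyP => hx.
by rewrite Hs0.
Qed.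

Local Open Scope ring_scope.
Lemma csgn_sw (f : FF) (j : 'I_N) : inbR f ->
  (csgn (sw f j) : int) = - csgn f.
Proof.
move=> Hf; have Hf' := sw_inbR j Hf.
have [hk ht Ej] := wid_cls j.
have hK := Kpos_of j.
have Hm := sw_at j Hf.
set m := sw f j (wid j) in Hm.
have am : f (wid j) != m by rewrite Ej; apply: Hm.
rewrite /csgn (bigD1 (Ordinal hk)) //= [in RHS](bigD1 (Ordinal hk)) //= -mulNr.

congr (_ * _).
  have [s [-> Hs]] := pik_some (Ordinal hk) Hf.
  have [s' [-> Hs']] := pik_some (Ordinal hk) Hf'.
  suff -> : s' = (s * tperm (f (wid j)) m)%g.
    by rewrite odd_permM odd_tperm am addbT signrN.
  apply: perm_eq_low => x hx; rewrite permM Hs // Hs' //=.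
  case: (eqVneq (cls (j %/ K) x) (wid j)) => E.
    by rewrite E tpermL.
  rewrite sw_other // tpermD //.
    by rewrite eq_sym; apply: rainbow => //; try exact: cls_neqz; try exact: wid_neqz;
      rewrite cls_val // cls_div.
  by rewrite eq_sym; apply: Hm.
apply: eq_bigr => k kn.
have kv : nat_of_ord k != (j %/ K)%N by apply: contraNneq kn => E; apply/eqP/val_inj.
rewrite /pik; congr (match _ with Some s => _ | None => _ end).
apply: eq_pick => s; apply: eq_forallb => x; case: (ltnP x K) => hx //=.
have E : inord (k * (r - 1) + x) != wid j.
  apply: contra kv => /eqP E.
  have : ((k * K + x) %/ K)%N = (j %/ K)%N.
    by rewrite -(cls_val (ltn_ord k) hx) /M_C.cls E Ej (cls_val hk ht) cls_div.
  by rewrite cls_div // => ->.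
by rewrite sw_other.
Qed.

End Comb2.

End M_D.
Import M_D.

Module M_E.
Set Implicit Arguments. Unset Strict Implicit. Unset Printing Implicit Defensive.
Local Open Scope ring_scope.

Section Aff.
Variable R : realFieldType.

Lemma prod_neg (x y : R) : x * y < 0 -> x < y -> x < 0 < y.
Proof.
move=> H xy; case: (ltP x 0) => hx.
  case: (ltP 0 y) => hy //=; exfalso.
  by move: H; rewrite le_gtF //; apply: mulr_le0 => //; apply: ltW.
by move: H; rewrite le_gtF //; apply: mulr_ge0 => //; apply: ltW; apply: le_lt_trans xy.
Qed.

Lemma aff_zero (A B s1 s2 : R) : s1 < s2 -> (A + s1 * B) * (A + s2 * B) < 0 ->
  exists s, [/\ s1 < s, s < s2 & A + s * B = 0].
Proof.
move=> s12 H.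
have B0 : B != 0.
  apply: contraTneq H => ->; rewrite !mulr0 addr0 -expr2 le_gtF //; exact: sqr_ge0.
have E : forall s, A + s * B = (s - (- A / B)) * B.
  by move=> s; rewrite mulrDl mulNr mulfVK // opprK addrC.
exists (- A / B); rewrite E subrr mul0r; move: H; rewrite !E.
rewrite mulrACA -expr2 => H.
have : (s1 - - A / B) * (s2 - - A / B) < 0.
  by move: H; rewrite pmulr_llt0 // lt_def sqrf_eq0 B0 sqr_ge0.
move/prod_neg; rewrite ltrD2r => /(_ s12) /andP [h1 h2].
by rewrite -subr_lt0 h1 -subr_gt0 h2.
Qed.
End Aff.

Section Seg.
Variable R : realFieldType.
Variables (F : finType) (n : nat) (P : pred F) (sg : F -> int) (A B : F -> 'I_n -> R).

Definition g f j (s : R) := A f j + s * B f j.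
Definition memb f s := [forall j, 0 <= g f j s].
Definition Hs s : int := \sum_(f | P f && memb f s) sg f.
Definition nz f j := (A f j != 0) || (B f j != 0).
Definition ev s := exists f j, [/\ P f, nz f j & g f j s = 0].
Definition tame s := forall f j, P f -> nz f j -> g f j s = 0 -> exists k, g f k s < 0.
Definition btw (x y s : R) := ((x < s) && (s < y)) || ((y < s) && (s < x)).

Lemma nz_ident f j : ~~ nz f j -> forall s, g f j s = 0.
Proof. by rewrite /nz negb_or => /andP [/negPn/eqP E1 /negPn/eqP E2] s; rewrite /g E1 E2 mulr0 addr0. Qed.

Lemma zero_between f j x y : g f j x * g f j y < 0 ->
  exists s, [/\ btw x y s, g f j s = 0 & nz f j].
Proof.
move=> H.
have nzj : nz f j.
  apply: contraTT H => /nz_ident E; rewrite !E mul0r ltxx //.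
case: (ltgtP x y) => xy.
- have [s [h1 h2 h3]] := aff_zero xy H; exists s; split => //.
  by rewrite /btw h1 h2.
- rewrite mulrC in H; have [s [h1 h2 h3]] := aff_zero xy H; exists s; split => //.
  by rewrite /btw h1 h2 orbT.
- by move: H; rewrite xy -expr2 le_gtF // sqr_ge0.
Qed.

Lemma btwC x y s : btw x y s = btw y x s.
Proof. by rewrite /btw orbC. Qed.

Lemma mem_trans f x y : tame x -> (forall s, btw x y s -> ~ ev s) ->
  P f -> memb f x -> memb f y.
Proof.
move=> Tx Hb Pf /forallP Hx; apply/forallP => j.
case nzj: (nz f j); last by rewrite nz_ident ?nzj.
have gx : 0 < g f j x.
  rewrite lt_def Hx andbT; apply/eqP => E.
  have [k hk] := Tx f j Pf nzj E; by move: (Hx k); rewrite leNgt hk.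
rewrite leNgt; apply/negP => gy.
have := @zero_between f j x y; rewrite pmulr_rlt0 // => /(_ gy) [s [h1 h2 h3]].
by apply: (Hb s h1); exists f, j.
Qed.

Lemma const s1 s2 : tame s1 -> tame s2 -> (forall s, btw s1 s2 s -> ~ ev s) ->
  Hs s1 = Hs s2.
Proof.
move=> T1 T2 Hb; apply: eq_bigl => f; case Pf: (P f) => //=.
apply/idP/idP; first exact: mem_trans.
by apply: mem_trans => // s; rewrite btwC; apply: Hb.
Qed.


Lemma same_sign (x y : R) : 0 < x * y -> (0 < x) = (0 < y).
Proof.
case: (ltgtP 0 x) => hx.
- by rewrite pmulr_rgt0.
- by rewrite nmulr_rgt0 // => hy; rewrite lt_gtF.
- by rewrite -hx mul0r ltxx.
Qed.

Lemma btw_lt x y s : x < y -> btw x y s -> (x < s) && (s < y).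
Proof.
move=> xy /orP [] // /andP [h1 h2]; exfalso.
by move: (lt_trans h1 h2); rewrite ltNge ltW.
Qed.

Variable sw : F -> 'I_n -> F.
Hypothesis Hinv : forall f j, P f -> P (sw f j) /\ sw (sw f j) j = f.
Hypothesis Hzero : forall f j s, P f -> g f j s = 0 -> forall k, g (sw f j) k s = g f k s.
Hypothesis Hprop : forall f j, P f -> exists rho, [/\ rho != 0,
  forall s, g (sw f j) j s = rho * g f j s & sg (sw f j) = - sgz rho * sg f].

Section Cross.
Variables p z q : R.
Hypotheses (pz : p < z) (zq : z < q) (np : ~ ev p) (nq : ~ ev q)
  (Hpq : forall s, p < s -> s < q -> s != z -> ~ ev s)
  (H2 : forall f j k, P f -> j != k -> g f j z = 0 -> g f k z = 0 -> False).

Lemma stable f j : P f -> g f j z != 0 ->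
  [/\ g f j p != 0, g f j q != 0, (0 < g f j p) = (0 < g f j z) &
     (0 < g f j q) = (0 < g f j z)].
Proof.
move=> Pf gz.
have nzj : nz f j by apply: contraNT gz => /nz_ident ->.
have gp : g f j p != 0 by apply/eqP => E; apply: np; exists f, j.
have gq : g f j q != 0 by apply/eqP => E; apply: nq; exists f, j.
split => //; apply: same_sign; rewrite lt_def mulf_neq0 //=.
- rewrite leNgt; apply/negP => /zero_between [s [/(btw_lt pz) /andP [h3 h4] h2 _]].
  apply: (Hpq (s := s)); last by exists f, j.
  + done.
  + exact: lt_trans zq.
  + by apply: contraNneq gz => <-; rewrite h2.
- rewrite leNgt; apply/negP => /zero_between [s [h1 h2 _]].
  move: h1; rewrite btwC => /(btw_lt zq) /andP [h3 h4].
  apply: (Hpq (s := s)); last by exists f, j.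
  + exact: lt_trans h3.
  + done.
  + by apply: contraNneq gz => <-; rewrite h2.
Qed.


Definition zj f := [pick j | g f j z == 0].
Definition sigma f := if P f then (if zj f is Some j then sw f j else f) else f.
Definition T f : int := ((memb f p)%:R - (memb f q)%:R) * sg f.

Lemma zj_unique f j k : P f -> g f j z = 0 -> g f k z = 0 -> j = k.
Proof. by move=> Pf gj gk; case: (eqVneq j k) => // ne; case: (H2 Pf ne gj gk). Qed.

Lemma g_sw_zero f j : P f -> g f j z = 0 -> g (sw f j) j z = 0.
Proof. by move=> Pf gj; have [rho [_ E _]] := Hprop j Pf; rewrite E gj mulr0. Qed.

Lemma sigma_some f j : P f -> g f j z = 0 -> sigma f = sw f j.
Proof.
move=> Pf gj; rewrite /sigma Pf /zj; case: pickP => [k /eqP gk | H].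
  by rewrite (zj_unique Pf gk gj).
by move: (H j); rewrite gj eqxx.
Qed.

Lemma sigma_none f : (forall j, g f j z != 0) -> sigma f = f.
Proof.
move=> H; rewrite /sigma /zj; case: (P f) => //; case: pickP => // k /eqP gk.
by move: (H k); rewrite gk eqxx.
Qed.

Lemma sigmaK f : sigma (sigma f) = f.
Proof.
case Pf: (P f); last by rewrite /sigma Pf Pf.
case: (pickP (fun j => g f j z == 0)) => [j /eqP gj | H].
  have [Pf' swK] := Hinv j Pf.
  by rewrite (sigma_some Pf gj) (sigma_some Pf' (g_sw_zero Pf gj)) swK.
have H' : forall j, g f j z != 0 by move=> j; rewrite H.
by rewrite !sigma_none.
Qed.

Lemma P_sigma f : P (sigma f) = P f.
Proof.
case Pf: (P f); last by rewrite /sigma Pf Pf.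
case: (pickP (fun j => g f j z == 0)) => [j /eqP gj | H].
  by rewrite (sigma_some Pf gj); case: (Hinv j Pf).
have H' : forall j, g f j z != 0 by move=> j; rewrite H.
by rewrite sigma_none.
Qed.

Lemma ge0_nz (x : R) : x != 0 -> (0 <= x) = (0 < x).
Proof. by move=> x0; rewrite lt_def x0. Qed.

Lemma T_none f : P f -> (forall j, g f j z != 0) -> T f = 0.
Proof.
move=> Pf H; rewrite /T.
suff -> : memb f p = memb f q by rewrite subrr mul0r.
apply: eq_forallb => j; have [h1 h2 h3 h4] := stable Pf (H j).
by rewrite !ge0_nz // h3 h4.
Qed.

Lemma forall_split (Q : pred 'I_n) j :
  [forall k, Q k] = [forall k, (k != j) ==> Q k] && Q j.
Proof.
apply/forallP/andP => [H | [/forallP H Hj] k]; first by split => //; apply/forallP => k; apply/implyP.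
by case: (eqVneq k j) => [-> // | ne]; move: (H k); rewrite ne.
Qed.

Lemma memb_split h j s : (forall k, k != j -> (0 <= g h k s) = (0 < g h k z)) ->
  memb h s = [forall k, (k != j) ==> (0 < g h k z)] && (0 <= g h j s).
Proof.
move=> H; rewrite /memb (forall_split _ j); congr (_ && _).
by apply: eq_forallb => k; case: (eqVneq k j) => //= ne; rewrite H.
Qed.

Lemma T_pair f j : P f -> g f j z = 0 -> T (sw f j) = - T f.
Proof.
move=> Pf gj; have [Pf' _] := Hinv j Pf.
set f' := sw f j.
have nzk : forall k, k != j -> g f k z != 0.
  by move=> k ne; apply/eqP => gk; apply: (H2 Pf ne gk gj).
have nzk' : forall k, k != j -> g f' k z != 0 by move=> k ne; rewrite /f' Hzero // nzk.
have stf : forall s, s = p \/ s = q -> memb f s =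
    [forall k, (k != j) ==> (0 < g f k z)] && (0 <= g f j s).
  move=> s hs; apply: memb_split => k ne; have [h1 h2 h3 h4] := stable Pf (nzk k ne).
  by case: hs => ->; rewrite ge0_nz.
have stf' : forall s, s = p \/ s = q -> memb f' s =
    [forall k, (k != j) ==> (0 < g f k z)] && (0 <= g f' j s).
  move=> s hs; rewrite (@memb_split f' j s).
    by congr (_ && _); apply: eq_forallb => k; rewrite /f' Hzero.
  move=> k ne; have [h1 h2 h3 h4] := stable Pf' (nzk' k ne).
  by case: hs => ->; rewrite ge0_nz.
rewrite /T !stf ?stf' //; try by [left | right].
set O := [forall k, _].
have [rho [rho0 Erho Esg]] := Hprop j Pf.
rewrite !Erho Esg.
case nzj: (nz f j).
  have B0 : B f j != 0.
    apply/negP => /eqP B0; move: nzj gj; rewrite /nz /g B0 mulr0 addr0 eqxx orbF => /eqP.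
    done.
  have Eg : forall s, g f j s = (s - z) * B f j.
    move=> s; have : A f j = - (z * B f j) by apply/eqP; rewrite -addr_eq0; apply/eqP.
    by rewrite /g => ->; rewrite mulrBl addrC.
  rewrite !Eg.
  have pz' : p - z < 0 by rewrite subr_lt0.
  have qz' : 0 < q - z by rewrite subr_gt0.
  case: O; last by rewrite /= subrr !mul0r oppr0.
  rewrite !andTb (nmulr_rge0 _ pz') (pmulr_rge0 _ qz').
  case: (ltgtP 0 rho) => hr; last by move: rho0; rewrite -hr eqxx.
  - rewrite !(pmulr_rge0 _ hr) (nmulr_rge0 _ pz') (pmulr_rge0 _ qz') gtr0_sgz //.
    case: (ltgtP 0 (B f j)) => hB; last by move: B0; rewrite -hB eqxx.
    + by rewrite /= ?mulNr ?mul1r ?mulrN ?sub0r ?subr0 ?mulN1r ?mulNr ?mul1r ?opprK.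
    + by rewrite /= ?mulNr ?mul1r ?mulrN ?sub0r ?subr0 ?mulN1r ?mulNr ?mul1r ?opprK.
  - rewrite !(nmulr_rge0 _ hr) (nmulr_rle0 _ pz') (pmulr_rle0 _ qz') ltr0_sgz //.
    case: (ltgtP 0 (B f j)) => hB; last by move: B0; rewrite -hB eqxx.
    + by rewrite /= ?mulNr ?mul1r ?mulrN ?sub0r ?subr0 ?mulN1r ?mulNr ?mul1r ?opprK.
    + by rewrite /= ?mulNr ?mul1r ?mulrN ?sub0r ?subr0 ?mulN1r ?mulNr ?mul1r ?opprK.
rewrite !(nz_ident (negbT nzj)) mulr0 lexx.
by rewrite subrr !mul0r oppr0.
Qed.

Lemma T_anti f : P f -> T (sigma f) = - T f.
Proof.
move=> Pf; case: (pickP (fun j => g f j z == 0)) => [j /eqP gj | H].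
  by rewrite (sigma_some Pf gj) T_pair.
have H' : forall j, g f j z != 0 by move=> j; rewrite H.
by rewrite sigma_none // T_none // oppr0.
Qed.

Lemma cross : Hs p = Hs q.
Proof.
apply/eqP; rewrite -subr_eq0; apply/eqP.
have -> : Hs p - Hs q = \sum_(f | P f) T f.
  rewrite /Hs !big_mkcondr /= -sumrB; apply: eq_bigr => f _.
  by rewrite /T; case: (memb f p); case: (memb f q); rewrite /= ?mulr1n ?mulr0n ?subrr ?mul0r ?subr0 ?mul1r ?sub0r ?mulNr ?mul1r.
set S := \sum_(f | P f) T f.
have : S = - S.
  have E1 : S = \sum_(f | P f) T (sigma f).
    by rewrite /S (reindex_inj (can_inj sigmaK)) /=; apply: eq_bigl => f; rewrite P_sigma.
  rewrite {1}E1 /S -sumrN; apply: eq_bigr => f Pf; exact: T_anti.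
move/eqP; rewrite -subr_eq0 opprK -mulr2n mulrn_eq0 /= => /eqP; done.
Qed.

End Cross.

Definition EV : seq R := [seq - A fj.1 fj.2 / B fj.1 fj.2 |
  fj <- enum [pred fj : F * 'I_n | P fj.1 && (B fj.1 fj.2 != 0)]].

Lemma ev_in s : ev s -> s \in EV.
Proof.
move=> [f [j [Pf nzj gs]]].
have B0 : B f j != 0.
  apply/negP => /eqP B0; move: nzj gs; rewrite /nz /g B0 mulr0 addr0 eqxx orbF => /eqP; done.
have -> : s = - A f j / B f j.
  by apply: (mulIf B0); rewrite divfK //; apply/eqP; rewrite -addr_eq0 addrC; apply/eqP.
by apply/mapP; exists (f, j) => //; rewrite mem_enum inE /= Pf B0.
Qed.

Lemma reg_tame s : ~ ev s -> tame s.
Proof. by move=> H f j Pf nzj gs; exfalso; apply: H; exists f, j. Qed.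

Lemma left_gap (E : seq R) a e0 : a < e0 ->
  exists b, [/\ a <= b, b < e0 & forall e, e \in E -> ~~ ((b < e) && (e < e0))].
Proof.
move=> ae; elim: E => [|x E [b [h1 h2 h3]]]; first by exists a; rewrite lexx.
case: (boolP ((b < x) && (x < e0))) => [/andP [bx xe] | nx].
  exists x; split => //; first by rewrite (le_trans h1) ?ltW.
  move=> e; rewrite in_cons => /orP [/eqP -> | eE]; first by rewrite ltxx.
  apply: contra (h3 e eE) => /andP [h4 h5]; by rewrite (lt_trans bx h4) h5.
exists b; split => // e; rewrite in_cons => /orP [/eqP -> // | ]; exact: h3.
Qed.

Lemma right_gap (E : seq R) e0 a : e0 < a ->
  exists b, [/\ e0 < b, b <= a & forall e, e \in E -> ~~ ((e0 < e) && (e < b))].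
Proof.
move=> ae; elim: E => [|x E [b [h1 h2 h3]]]; first by exists a; rewrite lexx.
case: (boolP ((e0 < x) && (x < b))) => [/andP [ex xb] | nx].
  exists x; split => //; first by rewrite (le_trans (ltW xb)).
  move=> e; rewrite in_cons => /orP [/eqP -> | eE]; first by rewrite ltxx andbF.
  apply: contra (h3 e eE) => /andP [h4 h5]; by rewrite h4 (lt_trans h5 xb).
exists b; split => // e; rewrite in_cons => /orP [/eqP -> // | ]; exact: h3.
Qed.

Lemma count_lt (T0 : eqType) (Q1 Q2 : pred T0) (x0 : T0) (l : seq T0) :
  (forall x, Q1 x -> Q2 x) -> x0 \in l -> Q2 x0 -> ~~ Q1 x0 ->
  (count Q1 l < count Q2 l)%N.
Proof.
move=> H; elim: l => [|x l IH] //=; rewrite in_cons => /orP [/eqP <- | xl] h2 h1.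
  by rewrite h2 (negbTE h1) add0n add1n ltnS sub_count.
apply: leq_trans (_ : (Q1 x + count Q2 l)%N <= _)%N; first by rewrite ltn_add2l IH.
by rewrite leq_add2r; case: (Q1 x) (H x) => // ->.
Qed.

Hypothesis Hdouble : forall s, 0 < s -> s < 1 ->
  forall f j k, P f -> j != k -> g f j s = 0 -> g f k s = 0 -> False.

Lemma seg_ind (m : nat) : forall s1 s2 : R, 0 <= s1 -> s1 < s2 -> s2 <= 1 -> tame s1 -> tame s2 ->
  (count (fun e : R => ((s1 < e) && (e < s2))%R) EV <= m)%N -> Hs s1 = Hs s2.
Proof.
elim: m => [|m IH] s1 s2 h0 h12 h1 T1 T2 hc;
  (case: (boolP (has (fun e => (s1 < e) && (e < s2)) EV)) => Hh; last first).
- apply: const => // s /(btw_lt h12) Hs1 Hev.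
  by move/hasPn: Hh => /(_ s (ev_in Hev)); rewrite Hs1.
- by move: Hh; rewrite has_count; move: hc; rewrite leqn0 => /eqP ->.
- apply: const => // s /(btw_lt h12) Hs1 Hev.
  by move/hasPn: Hh => /(_ s (ev_in Hev)); rewrite Hs1.
case/hasP: Hh => e0 e0E /andP [s1e e2s].
have [b [b1 b2 b3]] := left_gap EV s1e.
have [b' [b1' b2' b3']] := right_gap EV e2s.
set p := (b + e0) / 2; set q := (e0 + b') / 2.
have [bp pe] := midf_lt b2; have [eq0 qb] := midf_lt b1'.
rewrite -/p in bp pe; rewrite -/q in eq0 qb.
have np : ~ ev p by move/ev_in => /b3; rewrite bp pe.
have nq : ~ ev q by move/ev_in => /b3'; rewrite eq0 qb.
have Hcr : Hs p = Hs q.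
  apply: (cross pe eq0 np nq).
  - move=> s ps sq sne /ev_in sE.
    case: (ltgtP s e0) => hs; last by move: sne; rewrite hs eqxx.
    + by move: (b3 s sE); rewrite (lt_trans bp ps) hs.
    + by move: (b3' s sE); rewrite hs (lt_trans sq qb).
  - apply: Hdouble; first by apply: le_lt_trans s1e.
    exact: lt_le_trans e2s h1.
rewrite (IH s1 p) //; last 4 first.
- exact: le_lt_trans b1 bp.
- by rewrite ltW // (lt_trans pe) // (lt_le_trans e2s).
- exact: reg_tame.
- rewrite -ltnS; apply: leq_trans hc; apply: (count_lt (x0 := e0)) => //.
  + by move=> x /andP [h3 h4]; rewrite h3 (lt_trans h4) // (lt_trans pe e2s).
  + by rewrite s1e e2s.
  + by rewrite (lt_gtF pe) andbF.
rewrite Hcr (IH q s2) //.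
- by rewrite ltW // (le_lt_trans h0) // (lt_trans s1e eq0).
- exact: lt_le_trans qb b2'.
- exact: reg_tame.
- rewrite -ltnS; apply: leq_trans hc; apply: (count_lt (x0 := e0)) => //.
  + by move=> x /andP [h3 h4]; rewrite h4 andbT (lt_trans s1e) // (lt_trans eq0).
  + by rewrite s1e e2s.
  + by rewrite (lt_gtF eq0).
Qed.

Lemma seg : tame 0 -> tame 1 -> Hs 0 = Hs 1.
Proof. by move=> T0 T1; apply: (seg_ind (m := size EV)) => //; rewrite ?ltr01 ?count_size. Qed.

End Seg.

End M_E.
Import M_E.

Module M_F.
Set Implicit Arguments. Unset Strict Implicit. Unset Printing Implicit Defensive.
Local Open Scope ring_scope.

Section Fv.
Variable R : realFieldType.
Variable n : nat.
Definition fv (b x : 'rV[R]_n) : R := \sum_(k < n) x 0 k * b 0 k.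

Lemma fvD b x y : fv b (x + y) = fv b x + fv b y.
Proof. by rewrite /fv -big_split; apply: eq_bigr => k _; rewrite mxE mulrDl. Qed.
Lemma fvZ b a x : fv b (a *: x) = a * fv b x.
Proof. by rewrite /fv mulr_sumr; apply: eq_bigr => k _; rewrite mxE mulrA. Qed.
Lemma fvB b x y : fv b (x - y) = fv b x - fv b y.
Proof. by rewrite /fv -sumrB; apply: eq_bigr => k _; rewrite !mxE mulrBl. Qed.
Lemma fv_lin2 (p q : R) b1 b2 x : fv (q *: b1 - p *: b2) x = q * fv b1 x - p * fv b2 x.
Proof.
rewrite /fv !mulr_sumr -sumrB; apply: eq_bigr => k _; rewrite !mxE mulrBr !mulrA.
by rewrite [x 0 k * q]mulrC [x 0 k * p]mulrC.
Qed.
Lemma fv0 x : fv 0 x = 0.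
Proof. by rewrite /fv big1 // => k _; rewrite mxE mulr0. Qed.

Lemma fv_ex (bs : seq 'rV[R]_n) : (forall b, b \in bs -> b != 0) ->
  exists u, forall b, b \in bs -> fv b u != 0.
Proof.
move=> Hb.
pose co (b : 'rV[R]_n) (k : nat) := \sum_(i < n | val i == k) b 0 i.
have coE : forall b (i : 'I_n), co b i = b 0 i.
  by move=> b i; rewrite /co (big_pred1 i) // => j /=; rewrite val_eqE.
pose pb (b : 'rV[R]_n) : {poly R} := \poly_(k < n) co b k.
have pbE : forall b t, fv b (\row_(k < n) t ^+ k) = (pb b).[t].
  by move=> b t; rewrite horner_poly /fv; apply: eq_bigr => k _; rewrite mxE coE mulrC.
have pb0 : forall b, b != 0 -> pb b != 0.
  move=> b; apply: contraNneq => E; apply/eqP/rowP => k; rewrite [RHS]mxE -coE.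
  by have := congr1 (fun p : {poly R} => p`_k) E; rewrite coef_poly ltn_ord coef0.
pose Q := \prod_(b <- bs) pb b.
have Q0 : Q != 0 by rewrite prodf_seq_neq0; apply/allP => b /Hb /pb0.
pose rs := [seq i%:R | i <- iota 0 (size Q)] : seq R.
have [t _ Qt] : exists2 t, t \in rs & ~~ root Q t.
  apply/allPn; apply/negP => Hall.
  suff : uniq rs by move/(max_poly_roots Q0 Hall); rewrite /rs size_map size_iota ltnn.
  by rewrite /rs map_inj_uniq ?iota_uniq // => x y /eqP; rewrite eqr_nat => /eqP.
exists (\row_(k < n) t ^+ k) => b bb; rewrite pbE.
move: Qt; rewrite /root /Q horner_prod prodf_seq_neq0 => /allP /(_ b bb); done.
Qed.
End Fv.

End M_F.
Import M_F.

Module M_G.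
Set Implicit Arguments. Unset Strict Implicit. Unset Printing Implicit Defensive.
Local Open Scope ring_scope.

Section Main.
Variable R : rcfType.
Variables (d r : nat) (w : 'I_r -> 'rV[R]_(r - 1)) (c : 'I_(Ndim d r).+1 -> 'rV[R]_d).
Local Notation N := (Ndim d r).
Local Notation G := 'I_N.+1.
Local Notation z := (@ord_max N).
Local Notation wid := (widen_ord (leqnSn N)).
Local Notation FF := {ffun G -> 'I_r}.
Hypothesis Hgp : suff_general_position w c.
Local Notation la f j v := (lam w c f j v).
Local Notation MM f := (M w c f).

Definition colv (f : FF) (j : 'I_N) : 'rV[R]_N := \row_k (invmx (MM f)) k j.

Lemma lam_fv f j x : la f j x = fv (colv f j) x.
Proof. by rewrite /lam /lamv /fv mxE; apply: eq_bigr => k _; rewrite mxE. Qed.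

Lemma fv_row f i j : inbR f -> fv (colv f j) (row i (MM f)) = (i == j)%:R.
Proof.
move=> Hf; rewrite -lam_fv /lam /lamv -row_mul mulmxV ?unitM //.
by rewrite !mxE.
Qed.

Lemma colv_neq0 f j : inbR f -> colv f j != 0.
Proof.
move=> Hf; apply/eqP => E; have := fv_row j j Hf; rewrite E fv0 eqxx.
by move/eqP; rewrite eq_sym oner_eq0.
Qed.

Lemma alpha_neq0 f j k (p q : R) : inbR f -> j != k -> (p != 0) || (q != 0) ->
  q *: colv f j - p *: colv f k != 0.
Proof.
move=> Hf jk pq; apply/eqP => E.
have e1 := fv_lin2 p q (colv f j) (colv f k) (row j (MM f)).
have e2 := fv_lin2 p q (colv f j) (colv f k) (row k (MM f)).
rewrite E fv0 !fv_row // eqxx (negbTE jk) mulr1 mulr0 subr0 in e1.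
rewrite E fv0 !fv_row // eqxx eq_sym (negbTE jk) mulr1 mulr0 sub0r in e2.
by move: pq; rewrite -e1 (_ : p = 0) ?eqxx //; apply/eqP; rewrite -oppr_eq0 -e2.
Qed.

Lemma wid_neq (i j : 'I_N) : i != j -> wid i != wid j.
Proof. by apply: contra => /eqP /(congr1 val) /= E; apply/eqP/val_inj. Qed.

Lemma row_sw f j i : inbR f -> i != j -> row i (MM (sw f j)) = row i (MM f).
Proof. by move=> Hf ij; rewrite !rowM /PhiPt sw_other // wid_neq. Qed.

Lemma lam_sw_zero f j x : inbR f -> la f j x = 0 -> forall k, la (sw f j) k x = la f k x.
Proof.
move=> Hf Hj k; have Hf' := sw_inbR j Hf.
set l := lamv w c f x.
have E : l *m MM (sw f j) = l *m MM f.
  rewrite !mulM; apply: eq_bigr => i _; case: (eqVneq i j) => [-> | ij].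
    by move: Hj; rewrite /lam -/l => ->; rewrite !scale0r.
  by have := row_sw Hf ij; rewrite !rowM => ->.
have : lamv w c (sw f j) x = l by rewrite -{1}(lamvK x Hgp Hf) -/l -E lamv_mul.
by rewrite /lam => ->.
Qed.

Lemma detM_neq0 f : inbR f -> \det (MM f) != 0.
Proof. by move=> Hf; rewrite -unitfE -unitmxE unitM. Qed.

Lemma lam_sw_j f j x : inbR f ->
  la (sw f j) j x = (\det (MM f) / \det (MM (sw f j))) * la f j x.
Proof.
move=> Hf; have Hf' := sw_inbR j Hf.
have E1 := cramer j x (unitM Hgp Hf).
have E2 := cramer j x (unitM Hgp Hf').
have E3 : Mrep (MM (sw f j)) j x = Mrep (MM f) j x by apply: Mrep_same => i; apply: row_sw.
rewrite E3 -E1 in E2.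
apply: (mulIf (detM_neq0 Hf')); rewrite /lam /lamv E2 mulrAC divfK ?detM_neq0 //.
by rewrite mulrC.
Qed.

Lemma sgz_sq (x : R) : x != 0 -> sgz x * sgz x = 1.
Proof. by move=> x0; case: (ltgtP x 0) => h; [rewrite ltr0_sgz | rewrite gtr0_sgz | move: x0; rewrite h eqxx]. Qed.

Lemma sgn_sw f j : inbR f ->
  sgnR w c (sw f j) = - sgz (\det (MM f) / \det (MM (sw f j))) * sgnR w c f.
Proof.
move=> Hf; have Hf' := sw_inbR j Hf.
have sgzV : forall x : R, sgz (x^-1) = sgz x by move=> x; rewrite -sgz_sgr sgrV sgz_sgr.
rewrite /sgnR /gsgn csgn_sw // sgzM sgzV -/(M w c f) -/(M w c (sw f j)).
by rewrite mulrN mulNr mulrACA sgz_sq ?detM_neq0 // mul1r.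
Qed.


Lemma degC_eq v : v != 0 ->
  degC w c v = \sum_(f | inbR f && [forall j, 0 <= la f j v]) sgnR w c f.
Proof.
move=> v0; rewrite /degC; apply: eq_bigl => f; case Hf: (inbR f) => //=.
rewrite /asb; case: excluded_middle_informative => [h | h].
  by apply/esym/forallP; apply/(meets_iff Hgp Hf v0).
apply/esym/negbTE/negP => /forallP H; apply: h; exact/(meets_iff Hgp Hf v0).
Qed.

Definition alpha v f j k : 'rV[R]_N :=
  if (la f j v == 0) && (la f k v == 0) then colv f j
  else (la f k v) *: colv f j - (la f j v) *: colv f k.

Lemma alpha_ne0 v f j k : inbR f -> j != k -> alpha v f j k != 0.
Proof.
move=> Hf jk; rewrite /alpha; case: ifP => [_ | /negbT]; first exact: colv_neq0.
by rewrite negb_and => H; apply: alpha_neq0.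
Qed.

Section Inst.
Variables a u : 'rV[R]_N.
Hypotheses (a0 : a != 0) (Ha : generic_ray w c a)
  (U1 : forall f j, inbR f -> la f j u != 0)
  (U2 : forall f j k, inbR f -> j != k -> fv (alpha a f j k) u != 0).

Definition AA f j := la f j a.
Definition BB f j := la f j u - la f j a.

Lemma gE f j s : M_E.g AA BB f j s = la f j (a + s *: (u - a)).
Proof. by rewrite /M_E.g /AA /BB !lam_fv fvD fvZ fvB. Qed.

Lemma seg_inst : \sum_(f | inbR f && [forall j, 0 <= la f j a]) sgnR w c f =
  \sum_(f | inbR f && [forall j, 0 <= la f j u]) sgnR w c f.
Proof.
have E : Hs (@inbR d r) (sgnR w c) AA BB 0 = Hs (@inbR d r) (sgnR w c) AA BB 1.
apply: (@seg R FF N (@inbR d r) (sgnR w c) AA BB (@sw d r)).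
- by move=> f j Hf; split; [apply: sw_inbR | apply: sw_invol].
- move=> f j s Hf; rewrite gE => H0 k; rewrite !gE; exact: lam_sw_zero.
- move=> f j Hf; exists (\det (MM f) / \det (MM (sw f j))); split.
  + by rewrite mulf_neq0 ?invr_eq0 ?detM_neq0 // sw_inbR.
  + by move=> s; rewrite !gE lam_sw_j.
  + exact: sgn_sw.
- move=> s s0 s1 f j k Hf jk gj gk.
  move: (U2 Hf jk); rewrite /alpha; case: ifP => [/andP [/eqP pj /eqP pk] | /negbT nb].
    move: gj; rewrite /M_E.g /AA /BB pj subr0 add0r => /eqP; rewrite mulf_eq0 => /orP [/eqP s00 | /eqP uj].
      by move: s0; rewrite s00 ltxx.
    by rewrite -lam_fv uj eqxx.
  rewrite gE in gj; rewrite gE in gk.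
  have := fv_lin2 (la f j a) (la f k a) (colv f j) (colv f k) (a + s *: (u - a)).
  rewrite -!lam_fv gj gk !mulr0 subrr fvD fvZ fvB fv_lin2 -!lam_fv.
  rewrite [la f k a * la f j a]mulrC subrr subr0 add0r => /eqP.
  by rewrite mulf_eq0 (gt_eqF s0) /= => /eqP ->; rewrite eqxx.
- move=> f j Hf _; rewrite /M_E.g mul0r addr0 /AA => gj.
  case: (boolP [exists k, la f k a < 0]) => [/existsP [k hk] | /existsPn H].
    by exists k; rewrite /M_E.g mul0r addr0.
  exfalso.
  have Hge : forall k, 0 <= la f k a by move=> k; rewrite leNgt; apply: H.
  have [t [t0 Hc]] := ridge_build Hgp Hf a0 Hge gj.
  exact: (Ha Hf (wid_neqz j) t0 Hc).
- move=> f j Hf _; rewrite /M_E.g mul1r /AA /BB addrC subrK => uj.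
  by move: (U1 j Hf); rewrite uj eqxx.
rewrite /Hs /memb in E.
have E0 : forall f, [forall j, 0 <= M_E.g AA BB f j 0] = [forall j, 0 <= la f j a].
  by move=> f; apply: eq_forallb => j; rewrite /M_E.g mul0r addr0.
have E1 : forall f, [forall j, 0 <= M_E.g AA BB f j 1] = [forall j, 0 <= la f j u].
  by move=> f; apply: eq_forallb => j; rewrite /M_E.g mul1r /AA /BB addrC subrK.
by rewrite (eq_bigl _ _ (fun f => congr1 (andb _) (E0 f))) in E; rewrite E;
  apply: eq_bigl => f; rewrite E1.
Qed.
End Inst.

Lemma u_ex (a1 a2 : 'rV[R]_N) : exists u,
  [/\ forall f j, inbR f -> la f j u != 0,
      forall f j k, inbR f -> j != k -> fv (alpha a1 f j k) u != 0 &
      forall f j k, inbR f -> j != k -> fv (alpha a2 f j k) u != 0].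
Proof.
pose L1 := [seq colv x.1 x.2 | x <- enum [pred x : FF * 'I_N | inbR x.1]].
pose L2 (v : 'rV[R]_N) := [seq alpha v x.1.1 x.1.2 x.2 |
   x <- enum [pred x : FF * 'I_N * 'I_N | inbR x.1.1 && (x.1.2 != x.2)]].
have Hne : forall b, b \in L1 ++ L2 a1 ++ L2 a2 -> b != 0.
  move=> b; rewrite !mem_cat => /or3P [] /mapP [x]; rewrite mem_enum inE.
  - by move=> Hx ->; apply: colv_neq0.
  - by move=> /andP [Hx jk] ->; apply: alpha_ne0.
  - by move=> /andP [Hx jk] ->; apply: alpha_ne0.
have [u Hu] := fv_ex Hne.
exists u; split.
- move=> f j Hf; rewrite lam_fv; apply: Hu; rewrite mem_cat; apply/orP; left.
  by apply/mapP; exists (f, j); rewrite // mem_enum inE.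
- move=> f j k Hf jk; apply: Hu; rewrite !mem_cat; apply/or3P; apply: Or32.
  by apply/mapP; exists (f, j, k); rewrite // mem_enum inE /= Hf jk.
- move=> f j k Hf jk; apply: Hu; rewrite !mem_cat; apply/or3P; apply: Or33.
  by apply/mapP; exists (f, j, k); rewrite // mem_enum inE /= Hf jk.
Qed.

Lemma main_eq psi nu : psi != 0 -> nu != 0 -> generic_ray w c psi -> generic_ray w c nu ->
  degC w c psi = degC w c nu.
Proof.
move=> p0 n0 Hp Hn; have [u [U1 U2 U3]] := u_ex psi nu.
rewrite !degC_eq // (seg_inst p0 Hp U1 U2) (seg_inst n0 Hn U1 U3) //.
Qed.

End Main.

End M_G.
Import M_G.

Local Open Scope ring_scope.

Theorem lemma9 (R : rcfType) (d r : nat) (w : 'I_r -> 'rV[R]_(r - 1))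
  (c : 'I_(Ndim d r).+1 -> 'rV[R]_d) (psi nu : 'rV[R]_(Ndim d r)) :
  regular_simplex0 w ->
  injective c ->
  suff_general_position w c ->
  psi != 0 -> nu != 0 ->
  generic_ray w c psi -> generic_ray w c nu ->
  degC w c psi = degC w c nu.
Proof.
move=> _ _ Hgp p0 n0 Hp Hn; exact: (main_eq Hgp p0 n0 Hp Hn).
Qed.
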